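(* For all $i,j\in\mathbb{Z}$ with $i\neq j$, the linear orders $L_i$ and $L_j$ are not isomorphic. Moreover, each $L_i$ is scattered (contains no dense suborder).
   Context: Ordinal exponents have their usual ordinal meaning: $\omega^n$ is the ordinal $\omega^n$ for $n\in\omega$, and $\omega^\omega=\sup_{n<\omega}\omega^n$. For a positive integer $k$ and an order $Z$, $kZ$ denotes $k$ consecutive copies of $Z$. Given orders $M_k$ ($k\ge 1$), the sum $\cdots+M_3+M_2+M_1$ denotes the $\omega^*$-indexed ordered sum, in which $M_{k+1}$ lies entirely to the left of $M_k$. For $n\ge 0$ define \[ L_n=\cdots+3\omega^{n+3}+2\omega^{n+2}+\omega^{n+1}+\omega^\omega, \] i.e. the $\omega^*$-sum whose $k$-th summand from the right ($k\ge1$) is $k\,\omega^{n+k}$, followed on the far right by $\omega^\omega$. For $n\ge1$ define \[ L_{-n}=\cdots+(n+3)\omega^{3}+(n+2)\omega^{2}+(n+1)\omega+\omega^\omega, \] i.e. the $\omega^*$-sum whose $k$-th summand from the right ($k\ge1$) is $(n+k)\,\omega^{k}$, followed on the far right by $\omega^\omega$. An order is dense if it is infinite and between any two points there is a third; an order is scattered if it contains no dense suborder. *)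

(* Defs.v *)
From mathcomp Require Import all_boot all_order all_algebra.
From Stdlib Require List.
Set Implicit Arguments. Unset Strict Implicit. Unset Printing Implicit Defensive.

Record ord := Ord { car :> Type; olt : car -> car -> Prop }.

Fixpoint lexlt (s t : seq nat) : Prop :=
  match s, t with
  | a :: s', b :: t' => (a < b)%N \/ (a = b /\ lexlt s' t')
  | _, _ => False
  end.

Definition omega_pow (n : nat) : ord :=
  @Ord (n.-tuple nat) (fun x y => lexlt (val x) (val y)).

(* omega^omega : ordinals < omega^omega in Cantor normal form: s = [c_0; c_1; ...; c_d]
   stands for c_d w^d + ... + c_0, normalised by last coefficient nonzero (s = [::] is 0). *)
Definition CNF := {s : seq nat | last 1%N s != 0%N}.
Definition omega_omega : ord :=
  @Ord CNF (fun x y => (size (val x) < size (val y))%N \/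
                       (size (val x) = size (val y) /\ lexlt (rev (val x)) (rev (val y)))).

Definition kcopies (k : nat) (Z : ord) : ord :=
  @Ord ('I_k * Z)%type (fun a b => (a.1 < b.1)%N \/ (a.1 = b.1 /\ olt a.2 b.2)).

Definition osum (A B : ord) : ord :=
  @Ord (A + B)%type (fun a b => match a, b with
                                | inl x, inl y => olt x y
                                | inl _, inr _ => True
                                | inr _, inl _ => False
                                | inr x, inr y => olt x y
                                end).

(* ... + M 2 + M 1 + M 0 : omega^*-indexed sum; M (k+1) lies entirely left of M k.
   (M k here is the (k+1)-th summand from the right.) *)
Definition ostar_sum (M : nat -> ord) : ord :=
  @Ord {k : nat & M k}
    (fun a b => (projT1 b < projT1 a)%N \/
       exists k (x y : M k), a = existT _ k x /\ b = existT _ k y /\ olt x y).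

(* L_n (n >= 0): k-th summand from the right (k >= 1) is k omega^(n+k). *)
Definition L_nonneg (n : nat) : ord :=
  osum (ostar_sum (fun k => kcopies k.+1 (omega_pow (n + k.+1)))) omega_omega.

(* L_{-n} (n >= 1): k-th summand from the right (k >= 1) is (n+k) omega^k. *)
Definition L_neg (n : nat) : ord :=
  osum (ostar_sum (fun k => kcopies (n + k.+1) (omega_pow k.+1))) omega_omega.

Definition L (i : int) : ord :=
  match i with
  | Posz n => L_nonneg n
  | Negz m => L_neg m.+1   (* Negz m = -(m+1) *)
  end.

Definition isomorphic (A B : ord) : Prop :=
  exists f : A -> B, bijective f /\ forall x y, olt x y <-> olt (f x) (f y).

Definition infinite_sub (A : ord) (D : A -> Prop) : Prop :=
  ~ exists l : list A, forall x, D x -> List.In x l.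

Definition dense_sub (A : ord) (D : A -> Prop) : Prop :=
  infinite_sub D /\
  forall x y, D x -> D y -> olt x y -> exists z, D z /\ olt x z /\ olt z y.

Definition scattered (A : ord) : Prop := ~ exists D : A -> Prop, dense_sub D.

(* Main.v *)
Require Import Defs.
From mathcomp Require Import all_boot all_order all_algebra.
From mathcomp Require Import zify.
From Stdlib Require Import Eqdep_dec Classical.
Set Implicit Arguments. Unset Strict Implicit. Unset Printing Implicit Defensive.
Lemma lexlt_irr s : ~ lexlt s s.
Proof. elim: s => [|a s IH] //=; case; [by rewrite ltnn | by case]. Qed.

Lemma lexlt_trans s t u : lexlt s t -> lexlt t u -> lexlt s u.
Proof.
elim: s t u => [|a s IH] [|b t] [|c u] //=.
case=> [ab|[<- st]]; case=> [bc|[<- tu]].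
- by left; apply: ltn_trans ab bc.
- by left.
- by left.
- by right; split=> //; apply: IH st tu.
Qed.

Lemma lexlt_tri s t : size s = size t -> lexlt s t \/ s = t \/ lexlt t s.
Proof.
elim: s t => [|a s IH] [|b t] //=; first by right; left.
move=> [] /IH H.
case: (ltngtP a b) => [ab|ba|<-]; first by left; left.
- by right; right; left.
- case: H => [H|[->|H]].
  + by left; right.
  + by right; left.
  + by right; right; right.
Qed.

Lemma lexlt_cat p p' s s' : size p = size p' ->
  lexlt (p ++ s) (p' ++ s') <-> lexlt p p' \/ (p = p' /\ lexlt s s').
Proof.
elim: p p' => [|a p IH] [|b p'] //=.
- by move=> _; split; [move=> H0; right | case=> [[]|[]]].
- move=> [] /IH ->; split.
  + case=> [ab|[-> [H|[-> H]]]]; first by left; left.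
    * by left; right.
    * by right.
  + case=> [[ab|[-> H]]|[[-> ->] H]]; first by left.
    * by right; split=> //; left.
    * by right; split=> //; right.
Qed.

Lemma lexlt_nseq0 s : ~ lexlt s (nseq (size s) 0).
Proof. by elim: s => [|a s IH] //=; case=> [//|[_ /IH]]. Qed.

Definition tz (s : seq nat) := find (fun a => a != 0) (rev s).

Lemma tz_nseq n : tz (nseq n 0) = n.
Proof.
rewrite /tz rev_nseq hasNfind ?size_nseq //; by elim: n.
Qed.

Lemma tz_dec p v a : tz (p ++ v.+1 :: nseq a 0) = a.
Proof.
rewrite /tz rev_cat rev_cons rev_nseq -cats1 -catA find_cat.
have -> : has (fun a => a != 0) (nseq a 0) = false by elim: a.
by rewrite size_nseq /= addn0.
Qed.

Lemma seq_dec s : s = nseq (size s) 0 \/ exists p v a, s = p ++ v.+1 :: nseq a 0.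
Proof.
elim/last_ind: s => [|s x IH]; first by left.
case: x => [|v].
- case: IH => [E|[p [v [a E]]]].
  + by left; rewrite size_rcons {1}E; elim: (size s) => //= n <-.
  + right; exists p, v, a.+1; rewrite E rcons_cat rcons_cons.
    by congr (_ ++ _ :: _); elim: a {E} => //= a ->.
- by right; exists s, v, 0; rewrite cats1.
Qed.
Definition Blk (c m : nat -> nat) : ord :=
  ostar_sum (fun k => kcopies (c k) (omega_pow (m k))).
Definition LL (c m : nat -> nat) : ord := osum (Blk c m) omega_omega.

Lemma ostar_same (M : nat -> ord) k (a b : M k) :
  @olt (ostar_sum M) (existT (fun k => car (M k)) k a) (existT _ k b) <-> olt a b.
Proof.
split => /=.
- case=> [|[k0 [x [y [e1 [e2 H]]]]]]; first by rewrite ltnn.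
  have ek := f_equal (@projT1 _ _) e1; simpl in ek; subst k0.
  apply inj_pair2_eq_dec in e1; last exact: PeanoNat.Nat.eq_dec.
  apply inj_pair2_eq_dec in e2; last exact: PeanoNat.Nat.eq_dec.
  by subst.
- by move=> H; right; exists k, a, b.
Qed.

Lemma ostar_diff (M : nat -> ord) k k' (a : M k) (b : M k') : k <> k' ->
  @olt (ostar_sum M) (existT (fun k => car (M k)) k a) (existT _ k' b) <-> (k' < k)%N.
Proof.
move=> nk; split => /=; last by left.
case=> // [[k0 [x [y [e1 [e2 H]]]]]].
have := f_equal (@projT1 _ _) e1; have := f_equal (@projT1 _ _) e2.
by move=> /= e e'; subst.
Qed.

Definition E (c m : nat -> nat) k (j : 'I_(c k)) (t : (m k).-tuple nat) : LL c m :=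
  inl (existT (fun k => car (kcopies (c k) (omega_pow (m k)))) k (j, t)).

Lemma E_same c m k (j j' : 'I_(c k)) (t t' : (m k).-tuple nat) :
  olt (E j t) (E j' t') <-> (j < j')%N \/ (j = j' /\ lexlt t t').
Proof. exact (@ostar_same (fun k => kcopies (c k) (omega_pow (m k))) k (j, t) (j', t')). Qed.

Lemma E_diff c m k k' (j : 'I_(c k)) (t : (m k).-tuple nat) (j' : 'I_(c k')) (t' : (m k').-tuple nat) :
  k <> k' -> olt (E j t) (E j' t') <-> (k' < k)%N.
Proof. move=> nk; exact (@ostar_diff (fun k => kcopies (c k) (omega_pow (m k))) k k' (j, t) (j', t') nk). Qed.
Fixpoint deg_ge (A : ord) (d : nat) (x : A) : Prop :=
  match d with
  | 0 => True
  | d'.+1 => forall y, olt y x -> exists z, olt y z /\ olt z x /\ deg_ge d' z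
  end.

Lemma rank_deg (A : ord) (Dm : A -> Prop) (r : A -> nat) :
  (forall x y, Dm x -> olt y x -> Dm y) ->
  (forall x, Dm x -> exists y, olt y x /\ forall z, olt y z -> olt z x -> r z < r x) ->
  (forall x, Dm x -> 0 < r x -> forall y, olt y x ->
     exists z, olt y z /\ olt z x /\ r x <= (r z).+1) ->
  forall d x, Dm x -> (deg_ge d x <-> d <= r x).
Proof.
move=> down hb ha; elim=> [|d IH] x Dx //=.
split.
- move=> H; have [y [yx Hy]] := hb x Dx.
  have [z [yz [zx dz]]] := H y yx.
  have := Hy z yz zx; move/(IH z (down x z Dx zx)): dz.
  move=> dz rz; apply: leq_ltn_trans dz rz.
- move=> dr y yx; have [z [yz [zx rz]]] := ha x Dx (leq_ltn_trans (leq0n d) dr) y yx.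
  exists z; split=> //; split=> //; apply/(IH z (down x z Dx zx)).
  by rewrite -ltnS; apply: leq_trans dr rz.
Qed.

Lemma iso_deg (A B : ord) (f : A -> B) : bijective f ->
  (forall x y, olt x y <-> olt (f x) (f y)) ->
  forall d x, deg_ge d x <-> deg_ge d (f x).
Proof.
case=> g fK gK Hf; elim=> [|d IH] x //=; split.
- move=> H y' yx; rewrite -(gK y') -Hf in yx.
  have [z [yz [zx dz]]] := H _ yx; exists (f z).
  by rewrite -Hf -IH -{1}(gK y') -Hf.
- move=> H y yx; have [z' [yz [zx dz]]] := H (f y) (proj1 (Hf _ _) yx).
  exists (g z'); rewrite IH gK Hf gK; split=> //; by rewrite Hf gK.
Qed.
Lemma tz_lt u : u != nseq (size u) 0 -> tz u < size u.
Proof.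
case: (seq_dec u) => [E|[p [v [a E]]]]; first by rewrite -E eqxx.
by rewrite E tz_dec size_cat /= size_nseq => _; lia.
Qed.

Lemma tz_le u : tz u <= size u.
Proof.
case: (seq_dec u) => [E|[p [v [a E]]]]; first by rewrite E tz_nseq size_nseq.
by rewrite E tz_dec size_cat /= size_nseq; lia.
Qed.

Lemma tz_ne u : tz u < size u -> u != nseq (size u) 0.
Proof. by apply: contraTneq => E; rewrite E tz_nseq size_nseq ltnn. Qed.

Lemma split_at (u : seq nat) n : n < size u ->
  exists u1 w u3, u = u1 ++ w :: u3 /\ size u1 = n.
Proof.
move=> nu; exists (take n u), (nth 0 u n), (drop n.+1 u); split.
- by rewrite -drop_nth // cat_take_drop.
- by rewrite size_take nu.
Qed.

Lemma seqA p v a u : size u = size p + a.+1 ->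
  lexlt (p ++ v :: nseq a 0) u -> lexlt u (p ++ v.+1 :: nseq a 0) -> tz u < a.
Proof.
move=> su; have [u1 [w [u3 [E s1]]]] : exists u1 w u3, u = u1 ++ w :: u3 /\ size u1 = size p.
  by apply: split_at; rewrite su; lia.
subst u; move: su; rewrite size_cat s1 /= => /eqP; rewrite eqn_add2l eqSS => /eqP s3.
rewrite !lexlt_cat // => H1 H2.
case: H1 => [H1|[e1 H1]].
  case: H2 => [H2|[e2 H2]]; first by case: (lexlt_irr (lexlt_trans H1 H2)).
  by subst; case: (lexlt_irr H1).
subst u1; case: H2 => [H2|[_ H2]]; first by case: (lexlt_irr H2).
move: H1 H2 => /= [vw|[<- H1]] [wv|[ew H2]].
- lia.
- by move: H2; rewrite -s3 => /lexlt_nseq0.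
- case: (seq_dec u3) => [E3|[p3 [v3 [a3 E3]]]].
    by move: H1; rewrite E3 s3 => /lexlt_irr.
  rewrite E3 -cat_cons catA tz_dec.
  by move: s3; rewrite E3 size_cat /= size_nseq; lia.
- lia.
Qed.
Lemma seqHA p v a s : size s = size p + a.+2 ->
  lexlt s (p ++ v.+1 :: nseq a.+1 0) ->
  lexlt s (p ++ v :: (nth 0 s (size p).+1).+1 :: nseq a 0).
Proof.
move=> ss; have [s1 [w [s3 [E s1p]]]] := @split_at s (size p) ltac:(rewrite ss; lia).
subst s; move: ss; rewrite size_cat s1p /= => /eqP; rewrite eqn_add2l eqSS => /eqP s3a.
case: s3 s3a => [|w2 s4] //= [s4a].
rewrite nth_cat s1p ltnNge leqnSn subSnn /= !lexlt_cat // => [[H|[-> H]]]; first by left.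
right; split=> //=; move: H => /= [wv|[ew [//|[_ H]]]].
- case: (ltngtP w v) => [wv'|vw|->]; [by left| lia | by right; split=> //; left].
- by move: H; rewrite -s4a => /lexlt_nseq0.
Qed.

Lemma seqHB s n : size s = n.+1 -> lexlt s ((nth 0 s 0).+1 :: nseq n 0).
Proof. by case: s => //= w s _; left. Qed.
Definition rkL c m (x : LL c m) : nat :=
  match x with
  | inl (existT k (j, t)) => tz t + ((j == 0 :> nat) && (val t == nseq (m k) 0))
  | inr _ => 0
  end.

Lemma rkL_E c m k (j : 'I_(c k)) (t : (m k).-tuple nat) :
  rkL (E j t) = tz t + ((j == 0 :> nat) && (val t == nseq (m k) 0)).
Proof. by []. Qed.

Lemma tz_ltT n (u : n.-tuple nat) : val u != nseq n 0 -> tz u < n.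
Proof. by have := @tz_lt (val u); rewrite size_tuple. Qed.

Lemma tz_neT n (u : n.-tuple nat) : tz u < n -> val u != nseq n 0.
Proof. by have := @tz_ne (val u); rewrite size_tuple. Qed.

Lemma lexlt_nseq0T n (u : n.-tuple nat) : ~ lexlt u (nseq n 0).
Proof. by have := @lexlt_nseq0 (val u); rewrite size_tuple. Qed.

Lemma lexlt_nseq0T' n (u : n.-tuple nat) : lexlt (nseq n 0) u -> tz u < n.
Proof. move=> H; apply: tz_ltT; apply/eqP => E0; move: H; rewrite E0; exact: lexlt_irr. Qed.

Lemma rkL_lt c m k (j : 'I_(c k)) (t : (m k).-tuple nat) :
  tz t < m k -> rkL (E j t) = tz t.
Proof.
move=> H; rewrite rkL_E.
have /negbTE -> : val t != nseq (m k) 0 by apply: tz_neT.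
by rewrite andbF addn0.
Qed.

Lemma rkL_ge c m k (j : 'I_(c k)) (t : (m k).-tuple nat) : tz t <= rkL (E j t).
Proof. by rewrite rkL_E leq_addr. Qed.

Lemma LL_cases c m (y : LL c m) :
  (exists k j t, y = @E c m k j t) \/ (exists b, y = inr b).
Proof. by case: y => [[k [j t]]|b]; [left; exists k, j, t | right; exists b]. Qed.

Lemma blk_le c m k1 k2 (j1 : 'I_(c k1)) (t1 : (m k1).-tuple nat) (j2 : 'I_(c k2)) (t2 : (m k2).-tuple nat) :
  olt (E j1 t1) (E j2 t2) -> k2 <= k1.
Proof.
case: (eqVneq k1 k2) => [e|/eqP ne]; first by move=> _; rewrite e.
by move/(E_diff _ _ _ _ ne)/ltnW.
Qed.

Lemma between c m k1 k2 (j1 : 'I_(c k1)) (t1 : (m k1).-tuple nat) (j2 : 'I_(c k2)) (t2 : (m k2).-tuple nat) z :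
  olt (E j1 t1) z -> olt z (E j2 t2) ->
  exists k j t, z = @E c m k j t /\ k2 <= k <= k1.
Proof.
case: (LL_cases z) => [[k [j [t ->]]]|[b ->]] //.
move=> /blk_le H1 /blk_le H2; exists k, j, t; split=> //; lia.
Qed.

Lemma lt_E c m k (j : 'I_(c k)) (t : (m k).-tuple nat) y :
  olt y (E j t) -> exists k' j' t', y = @E c m k' j' t'.
Proof. by case: (LL_cases y) => [H|[b ->]]. Qed.

Lemma LL_hb c m (Hc : forall k, 0 < c k) (Hm : forall k, m k.+1 = (m k).+1) k
  (j : 'I_(c k)) (t : (m k).-tuple nat) :
  exists y, olt y (E j t) /\ forall z, olt y z -> olt z (E j t) -> rkL z < rkL (E j t).
Proof.
case: (seq_dec t) => [Et|[p [v [a Et]]]].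
- rewrite size_tuple in Et.
  have Et' : val t = nseq (m k) 0 := Et.
  have Ht : tz t = m k by rewrite Et tz_nseq.
  case: j => [[|j'] Hj].
  +
    have Hc1 : (c k.+1).-1 < c k.+1 by rewrite prednK.
    exists (@E c m k.+1 (Ordinal Hc1) (nseq_tuple (m k.+1) 0)); split.
      by apply/E_diff => //; lia.
    move=> z H1 H2; have [k' [j'' [u [Ez Hk]]]] := between H1 H2; subst z.
    have : k' = k \/ k' = k.+1 by lia.
    case=> ?; subst k'.
    * move/E_same: H2 => [//|[_ H2]].
      by move: H2; rewrite Et => H2; case: (lexlt_nseq0T H2).
    * move/E_same: H1 => [/= H1|[_ H1]]; first by have := ltn_ord j''; lia.
      have Hu : tz u < m k.+1 by apply: lexlt_nseq0T'.
      rewrite (rkL_lt _ Hu) rkL_E Ht Et' eqxx /=; have := Hm k; lia.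
  + have Hj' : j' < c k by lia.
    exists (@E c m k (Ordinal Hj') (nseq_tuple (m k) 0)); split.
      by apply/E_same; left => /=.
    move=> z H1 H2; have [k' [j'' [u [Ez Hk]]]] := between H1 H2; subst z.
    have ? : k' = k by lia. subst k'.
    have Hx : rkL (E (Ordinal Hj) t) = m k by rewrite rkL_E Ht /= addn0.
    rewrite Hx.
    move/E_same: H1 => [/= H1|[e1 H1]]; move/E_same: H2 => [/= H2|[e2 H2]].
    * lia.
    * by move: H2; rewrite Et => H2; case: (lexlt_nseq0T H2).
    * have Hu : tz u < m k by apply: lexlt_nseq0T'.
      by rewrite (negbTE (tz_neT Hu)) andbF addn0.
    * by move: e2; rewrite -e1 => /(f_equal val) /=; lia.
- have sz : size (p ++ v :: nseq a 0) == m k.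
    by rewrite -(size_tuple t) Et !size_cat.
  exists (@E c m k j (Tuple sz)); split.
    by apply/E_same; right; split=> //=; rewrite Et lexlt_cat //; right; split=> //; left.
  move=> z H1 H2; have [k' [j'' [u [Ez Hk]]]] := between H1 H2; subst z.
  have ? : k' = k by lia. subst k'.
  have Hx : a <= rkL (E j t) by rewrite -{1}(tz_dec p v a) -Et rkL_ge.
  move/E_same: H1 => [/= H1|[e1 H1]]; move/E_same: H2 => [/= H2|[e2 H2]].
  * lia.
  * by subst; move: H1; rewrite ltnn.
  * by subst; move: H2; rewrite ltnn.
  * have st : size (p ++ v.+1 :: nseq a 0) = m k by rewrite -Et; exact: size_tuple.
    have su0 : size (val u) = m k := size_tuple u.
    rewrite size_cat /= size_nseq in st.
    have su : size u = size p + a.+1 by rewrite size_tuple; lia.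
    move: H2; rewrite Et => H2.
    have Hu := seqA su H1 H2.
    have Hu' : tz u < m k by lia.
    rewrite (rkL_lt _ Hu'); lia.
Qed.
Lemma tz_head N n : tz (N.+1 :: nseq n 0) = n.
Proof. exact: (tz_dec [::] N n). Qed.

Lemma LL_ha c m (Hc : forall k, 0 < c k) (Hm : forall k, m k.+1 = (m k).+1)
  (Hm0 : forall k, 0 < m k) k (j : 'I_(c k)) (t : (m k).-tuple nat) :
  0 < rkL (E j t) -> forall y, olt y (E j t) ->
  exists z, olt y z /\ olt z (E j t) /\ rkL (E j t) <= (rkL z).+1.
Proof.
move=> r0 y yx; have [ky [jy [s Ey]]] := lt_E yx; subst y.
case: (seq_dec t) => [Et|[p [v [a Et]]]].
- rewrite size_tuple in Et.
  have Et' : val t = nseq (m k) 0 := Et.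
  have Ht : tz t = m k by rewrite Et tz_nseq.
  case: j yx r0 => [[|j'] Hj] yx r0.
  +
    have Hc1 : (c k.+1).-1 < c k.+1 by rewrite prednK.
    have Hx : rkL (E (Ordinal Hj) t) = (m k).+1 by rewrite rkL_E Ht Et' eqxx /= addn1.
    have szN : forall N, size (N.+1 :: nseq (m k.+1).-1 0) == m k.+1.
      by move=> N; rewrite /= size_nseq prednK.
    have rN : forall N, rkL (@E c m k.+1 (Ordinal Hc1) (Tuple (szN N))) = m k.
      move=> N; rewrite rkL_lt /= tz_head; first by rewrite Hm.
      by rewrite prednK.
    have zx : forall N, olt (@E c m k.+1 (Ordinal Hc1) (Tuple (szN N))) (E (Ordinal Hj) t).
      by move=> N; apply/E_diff => //; lia.
    have kyk : k < ky.
      case: (eqVneq ky k) => [e|/eqP ne]; last by move: yx; move/E_diff: (ne) => ->; lia.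
      subst ky; move/E_same: yx => [//|[_ H]].
      by move: H; rewrite Et => H; case: (lexlt_nseq0T H).
    have Hgoal : forall N, olt (E jy s) (@E c m k.+1 (Ordinal Hc1) (Tuple (szN N))) ->
       exists z, olt (E jy s) z /\ olt z (E (Ordinal Hj) t) /\ rkL (E (Ordinal Hj) t) <= (rkL z).+1.
      by move=> N H; exists (@E c m k.+1 (Ordinal Hc1) (Tuple (szN N))); rewrite Hx rN.
    case: (eqVneq ky k.+1) => [e|/eqP ne].
    * subst ky; apply: (Hgoal (nth 0 s 0)); apply/E_same.
      have : jy <= (c k.+1).-1 by rewrite -ltnS prednK.
      rewrite leq_eqVlt => /orP [/eqP e|lt]; last by left.
      right; split; first by apply: ord_inj.
      by apply: seqHB; rewrite size_tuple prednK.
    * by apply: (Hgoal 0); apply/E_diff => //; lia.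
  + have Hj' : j' < c k by lia.
    have Hx : rkL (E (Ordinal Hj) t) = m k by rewrite rkL_E Ht /= addn0.
    have szN : forall N, size (N.+1 :: nseq (m k).-1 0) == m k.
      by move=> N; rewrite /= size_nseq prednK.
    have rN : forall N, rkL (@E c m k (Ordinal Hj') (Tuple (szN N))) = (m k).-1.
      by move=> N; rewrite rkL_lt /= tz_head // prednK.
    have Hgoal : forall N, olt (E jy s) (@E c m k (Ordinal Hj') (Tuple (szN N))) ->
       exists z, olt (E jy s) z /\ olt z (E (Ordinal Hj) t) /\ rkL (E (Ordinal Hj) t) <= (rkL z).+1.
      move=> N H; exists (@E c m k (Ordinal Hj') (Tuple (szN N))); rewrite Hx rN.
      split=> //; split; first by apply/E_same; left.
      by rewrite prednK.
    case: (eqVneq ky k) => [e|/eqP ne]; last first.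
      apply: (Hgoal 0); apply/E_diff => //; move/E_diff: yx; exact.
    subst ky; move/E_same: yx => [/= lt|[e H]]; last first.
      by move: H; rewrite Et => H; case: (lexlt_nseq0T H).
    move: lt; rewrite ltnS leq_eqVlt => /orP [/eqP e|lt]; last by apply: (Hgoal 0); apply/E_same; left.
    apply: (Hgoal (nth 0 s 0)); apply/E_same; right; split; first by apply: ord_inj.
    by apply: seqHB; rewrite size_tuple prednK.
- case: a Et => [|a] Et.
    have H0 : tz t < m k by rewrite Et tz_dec.
    by rewrite (rkL_lt _ H0) Et tz_dec in r0.
  have szN : forall N, size (p ++ v :: N.+1 :: nseq a 0) == m k.
    move=> N; have st : size (p ++ v.+1 :: nseq a.+1 0) = m k by rewrite -Et; exact: size_tuple.
    by move: st; rewrite !size_cat /= !size_nseq => <-.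
  have Hx : rkL (E j t) = a.+1.
    have H0 : tz t < m k by rewrite Et tz_dec -(size_tuple t) Et size_cat /= size_nseq; lia.
    by rewrite (rkL_lt _ H0) Et tz_dec.
  have rN : forall N, rkL (@E c m k j (Tuple (szN N))) = a.
    move=> N; have e : p ++ v :: N.+1 :: nseq a 0 = (rcons p v) ++ N.+1 :: nseq a 0 by rewrite -cats1 -catA.
    have H0 : tz (Tuple (szN N)) < m k by rewrite /= e tz_dec -(eqP (szN N)) size_cat /= size_nseq; lia.
    by rewrite (rkL_lt _ H0) /= e tz_dec.
  have Hgoal : forall N, olt (E jy s) (@E c m k j (Tuple (szN N))) ->
       exists z, olt (E jy s) z /\ olt z (E j t) /\ rkL (E j t) <= (rkL z).+1.
    move=> N H; exists (@E c m k j (Tuple (szN N))); rewrite Hx rN.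
    split=> //; split=> //; apply/E_same; right; split=> //=.
    by rewrite Et lexlt_cat //; right; split=> //; left.
  case: (eqVneq ky k) => [e|/eqP ne]; last first.
    apply: (Hgoal 0); apply/E_diff => //; move/E_diff: yx; exact.
  subst ky; move/E_same: yx => [/= lt|[e H]]; first by apply: (Hgoal 0); apply/E_same; left.
  subst jy; apply: (Hgoal (nth 0 s (size p).+1)); apply/E_same; right; split=> //=.
  apply: seqHA; last by rewrite -Et.
  have st : size (p ++ v.+1 :: nseq a.+1 0) = m k by rewrite -Et; exact: size_tuple.
  by rewrite size_tuple -st size_cat /= size_nseq; lia.
Qed.
Lemma LL_deg c m (Hc : forall k, 0 < c k) (Hm : forall k, m k.+1 = (m k).+1)
  (Hm0 : forall k, 0 < m k) d k (j : 'I_(c k)) (t : (m k).-tuple nat) :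
  deg_ge d (@E c m k j t) <-> d <= rkL (E j t).
Proof.
apply: (@rank_deg (LL c m) (fun x => exists k j t, x = @E c m k j t)).
- by move=> x y [k' [j' [t' ->]]] /lt_E.
- by move=> x [k' [j' [t' ->]]]; apply: LL_hb.
- by move=> x [k' [j' [t' ->]]]; apply: LL_ha.
- by exists k, j, t.
Qed.

Lemma rkL_le c m k (j : 'I_(c k)) (t : (m k).-tuple nat) : rkL (E j t) <= (m k).+1.
Proof.
rewrite rkL_E; have := tz_le t; rewrite size_tuple.
by case: ((j == 0 :> nat) && _) => /=; lia.
Qed.

Lemma m_add m (Hm : forall k, m k.+1 = (m k).+1) a b : m (a + b) = m a + b.
Proof. by elim: b => [|b IH]; rewrite ?addn0 // addnS Hm IH addnS. Qed.

Lemma InE (T : eqType) (x : T) (s : seq T) : List.In x s <-> x \in s.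
Proof.
elim: s => [|a s IH] //=; rewrite in_cons; split.
- by case=> [->|/IH ->]; rewrite ?eqxx ?orbT.
- by case/orP=> [/eqP ->|/IH]; [left|right].
Qed.

Lemma uniq_NoDup' (T : eqType) (s : seq T) : uniq s -> List.NoDup s.
Proof.
elim: s => [|a s IH] /=; first by constructor.
by case/andP=> ns us; constructor; [rewrite InE; apply/negP|apply: IH].
Qed.

Lemma length_size (T : Type) (s : seq T) : List.length s = size s.
Proof. by elim: s => //= a s ->. Qed.

Definition Inv (A : ord) (x : A) (e N : nat) : Prop :=
  exists q, olt q x /\ deg_ge e.+1 q /\ (forall z, olt q z -> olt z x -> ~ deg_ge e.+1 z) /\
  exists l : list A, List.NoDup l /\ List.length l = N /\
    forall z, (olt q z /\ olt z x /\ deg_ge e z) <-> List.In z l.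

Lemma count_nz n : count (fun j : 'I_n => j != 0 :> nat) (enum 'I_n) = n.-1.
Proof.
case: n => [|n]; first by rewrite enum_ord0.
have := count_predC (fun j : 'I_n.+1 => j == 0 :> nat) (enum 'I_n.+1).
rewrite size_enum_ord.
have -> : count (fun j : 'I_n.+1 => j == 0 :> nat) (enum 'I_n.+1) = 1.
  rewrite (eq_count (a2 := pred1 ord0)); first by rewrite count_uniq_mem ?enum_uniq // mem_enum.
  by move=> j /=.
by rewrite add1n => [[]].
Qed.
Lemma NoDup_map_inj (A B : Type) (f : A -> B) (l : list A) :
  (forall x y, f x = f y -> x = y) -> List.NoDup l -> List.NoDup (List.map f l).
Proof.
move=> fi; elim=> [|a l0 na _ IH] /=; constructor => //.
by move/List.in_map_iff => [x [/fi -> xl]].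
Qed.

Lemma E_inj c m k (j j' : 'I_(c k)) (t t' : (m k).-tuple nat) :
  @E c m k j t = E j' t' -> j = j' /\ t = t'.
Proof.
move=> H.
have H1 := f_equal (fun x : LL c m => match x with inl b => b | inr _ => existT _ k (j, t) end) H.
simpl in H1.
apply inj_pair2_eq_dec in H1; last exact: PeanoNat.Nat.eq_dec.
by case: H1 => -> ->.
Qed.

Lemma E_neqk c m k k' (j : 'I_(c k)) (t : (m k).-tuple nat) (j' : 'I_(c k')) (t' : (m k').-tuple nat) :
  @E c m k j t = E j' t' -> k = k'.
Proof. move=> H; exact: (f_equal (fun x : LL c m => match x with inl b => projT1 b | inr _ => 0 end) H). Qed.

Lemma LL_inv c m (Hc : forall k, 0 < c k) (Hm : forall k, m k.+1 = (m k).+1)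
  (Hm0 : forall k, 0 < m k) (x : LL c m) K :
  (forall k' (j : 'I_(c k')) (t : (m k').-tuple nat), K < k' -> olt (E j t) x) ->
  (forall z, olt z x -> exists k' j t, z = @E c m k' j t) ->
  forall k1, K < k1 -> Inv x (m k1.+1) (c k1.+1).
Proof.
move=> Px Ix k1 Kk.
pose k := k1.+1.
change (Inv x (m k) (c k)).
pose q := @E c m k (Ordinal (Hc k)) (nseq_tuple (m k) 0).
pose a := @E c m k1 (Ordinal (Hc k1)) (nseq_tuple (m k1) 0).
pose f := fun j : 'I_(c k) => @E c m k j (nseq_tuple (m k) 0).
pose s := filter (fun j : 'I_(c k) => j != 0 :> nat) (enum 'I_(c k)).
have HmD : forall a b, m (a + b) = m a + b by apply: m_add.
have rq : rkL q = (m k).+1 by rewrite rkL_E /= tz_nseq eqxx addn1.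
have ra : rkL a = m k by rewrite rkL_E /= tz_nseq eqxx addn1 Hm.
have rf : forall j, j \in s -> rkL (f j) = m k.
  by move=> j; rewrite mem_filter => /andP [/negbTE nj _]; rewrite rkL_E /= tz_nseq nj addn0.
exists q; split; first by apply: Px; lia.
split; first by apply/LL_deg => //; rewrite rq.
split.
  move=> z qz zx; have [kz [jz [u Ez]]] := Ix z zx; subst z.
  rewrite LL_deg // => rz.
  have kzk := blk_le qz.
  case: (eqVneq kz k) => [e|/eqP ne].
  - move: jz u qz zx rz; rewrite e => jz u qz zx rz.
    move/E_same: qz => [/= jz0|[ej H]].
    + move: rz; rewrite rkL_E; have := tz_le u; rewrite size_tuple.
      have -> : (jz == 0 :> nat) = false by apply/negbTE; rewrite -lt0n.
      by rewrite andFb addn0; lia.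
    + have Hu : tz u < m k by apply: lexlt_nseq0T'.
      by move: rz; rewrite (rkL_lt _ Hu); lia.
  - have : kz < k by lia.
    move=> lt; have := rkL_le jz u.
    have : m k = m kz + (k - kz) by rewrite -HmD subnKC // ltnW.
    lia.
exists (a :: List.map f s); split.
  constructor.
    move/List.in_map_iff => [j [/E_neqk]]; lia.
  apply: NoDup_map_inj; first by move=> j j' /E_inj [].
  by apply: uniq_NoDup'; rewrite filter_uniq // enum_uniq.
split.
  by rewrite /= List.length_map length_size size_filter count_nz prednK.
move=> z; split.
- move=> [qz [zx dz]]; have [kz [jz [u Ez]]] := Ix z zx; subst z.
  move: dz; rewrite LL_deg // => rz.
  have kzk := blk_le qz.
  case: (eqVneq kz k) => [e|/eqP ne].
  + move: jz u qz zx rz; rewrite e => jz u qz zx rz.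
    move/E_same: qz => [/= jz0|[ej H]]; last first.
      have Hu : tz u < m k by apply: lexlt_nseq0T'.
      by move: rz; rewrite (rkL_lt _ Hu); lia.
    right; apply/List.in_map_iff; exists jz; split; last first.
      by rewrite InE mem_filter mem_enum andbT -lt0n.
    have Hu : tz u = m k.
      move: rz; rewrite rkL_E; have := tz_le u; rewrite size_tuple.
      have -> : (jz == 0 :> nat) = false by apply/negbTE; rewrite -lt0n.
      by rewrite andFb addn0; lia.
    have Eu : val u = nseq (m k) 0.
      case: (seq_dec u) => [Eu|[p [v [b Eu]]]]; first by rewrite size_tuple in Eu; exact Eu.
      have : size (tval u) = m k by exact: size_tuple.
      move=> su; exfalso; move: Hu su; rewrite Eu tz_dec size_cat /= size_nseq; lia.
    by rewrite /f; congr E; apply: val_inj.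
  + have lt : kz < k by lia.
    have ekz : m k = m kz + (k - kz) by rewrite -HmD subnKC // ltnW.
    have := rkL_le jz u => rl.
    have ekz1 : kz = k1 by lia.
    move: jz u qz zx rz rl ekz lt ne kzk; rewrite ekz1 => jz u qz zx rz rl ekz lt ne kzk.
    left; move: rz; rewrite rkL_E; have := tz_le u; rewrite size_tuple.
    case: (boolP ((jz == 0 :> nat) && (val u == nseq (m k1) 0))) => [/andP [/eqP j0 /eqP u0]|_]; last first.
      rewrite addn0 Hm; lia.
    move=> _ _; rewrite /a; congr E; [by apply: ord_inj | by apply: val_inj].
- case=> [<-|/List.in_map_iff [j [<- js]]].
  + split; first by apply/E_diff; [lia | done].
    split; first by apply: Px; lia.
    by apply/LL_deg => //; rewrite ra.
  + move: js; rewrite InE => js.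
    split.
      apply/E_same; left => /=; move: js; rewrite mem_filter; lia.
    split; first by apply: Px; lia.
    by apply/LL_deg => //; rewrite rf.
Qed.
Lemma LL_tri c m (x y : LL c m) : olt x y \/ x = y \/ olt y x.
Proof.
case: (LL_cases x) => [[k [j [t ->]]]|[b ->]]; case: (LL_cases y) => [[k' [j' [t' ->]]]|[b' ->]].
- case: (eqVneq k k') => [e|/eqP ne]; last first.
    case: (ltngtP k k') => [lt|gt|e]; last by case: ne.
    + by right; right; apply/E_diff => //; apply/nesym.
    + by left; apply/E_diff.
  subst k'; case: (ltngtP j j') => [lt|gt|e].
  + by left; apply/E_same; left.
  + by right; right; apply/E_same; left.
  + have ej := ord_inj e; subst j'.
    have [H|[H|H]] := @lexlt_tri t t' ltac:(by rewrite !size_tuple).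
    * by left; apply/E_same; right.
    * by right; left; congr E; apply: val_inj.
    * by right; right; apply/E_same; right.
- by left.
- by right; right.
- case: b b' => [s sP] [s' sP'] /=.
  case: (ltngtP (size s) (size s')) => [lt|gt|e].
  + by left; left.
  + by right; right; left.
  + have [H|[H|H]] := @lexlt_tri (rev s) (rev s') ltac:(by rewrite !size_rev).
    * by left; right.
    * right; left; congr inr; apply: val_inj => /=; by rewrite -(revK s) H revK.
    * by right; right; right.
Qed.

Lemma iso_Inv (A B : ord) (f : A -> B) : bijective f ->
  (forall x y, olt x y <-> olt (f x) (f y)) ->
  forall x e N, Inv x e N -> Inv (f x) e N.
Proof.
move=> bf Hf; have [g fK gK] := bf.
move=> x e N [q [qx [dq [nz [l [nd [ln Hl]]]]]]].
exists (f q); split; first by rewrite -Hf.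
split; first by rewrite -iso_deg.
split.
  move=> z' qz zx; rewrite -(gK z') in qz zx *.
  by rewrite -iso_deg //; apply: nz; rewrite Hf.
exists (List.map f l); split.
  by apply: NoDup_map_inj => // a b /(f_equal g); rewrite !fK.
split; first by rewrite List.length_map.
move=> z'; rewrite -(gK z') -Hf -Hf -iso_deg // Hl; split.
- exact: List.in_map.
- by move/List.in_map_iff => [a [/(f_equal g)]]; rewrite !fK => ->.
Qed.

Lemma Inv_uniq (A : ord) (tri : forall x y : A, olt x y \/ x = y \/ olt y x)
  (x : A) e N N' : Inv x e N -> Inv x e N' -> N = N'.
Proof.
move=> [q [qx [dq [nz [l [nd [ln Hl]]]]]]] [q' [qx' [dq' [nz' [l' [nd' [ln' Hl']]]]]]].
case: (tri q q') => [lt|[eq|gt]].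
- by case: (nz q').
- subst q'; apply/eqP; rewrite eqn_leq -ln -ln'; apply/andP; split; apply/leP.
  + by apply: List.NoDup_incl_length => // z /Hl /Hl'.
  + by apply: List.NoDup_incl_length => // z /Hl' /Hl.
- by case: (nz' q).
Qed.
Definition zeroCNF : CNF := exist (fun s : seq nat => last 1 s != 0) [::] isT.
Definition pL c m : LL c m := inr zeroCNF.

Definition PK c m K (x : LL c m) :=
  (forall k' (j : 'I_(c k')) (t : (m k').-tuple nat), K < k' -> olt (E j t) x) /\
  (forall z, olt z x -> exists k' j t, z = @E c m k' j t).

Lemma not_lt_zero c m (b : CNF) : ~ @olt (LL c m) (inr b) (pL c m).
Proof. case: b => [[|a s] sP] /= [//|[]] // _; rewrite /rev /=; by case: (catrev s [:: a]). Qed.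

Lemma lep_PK c m (x : LL c m) : x = pL c m \/ olt x (pL c m) -> exists K, PK K x.
Proof.
have I0 : forall z, olt z (pL c m) -> exists k' j t, z = @E c m k' j t.
  move=> z; case: (LL_cases z) => [//|[b ->] /not_lt_zero //].
case=> [->|].
  by exists 0; split.
case: (LL_cases x) => [[k [j [t ->]]]|[b -> /not_lt_zero //]] _.
exists k; split.
- move=> k' j' t' kk; apply/E_diff => //; lia.
- by move=> z /lt_E.
Qed.

Lemma LL_eq c m c' m' (Hc : forall k, 0 < c k) (Hm : forall k, m k.+1 = (m k).+1)
  (Hm0 : forall k, 0 < m k)
  (Hc' : forall k, 0 < c' k) (Hm' : forall k, m' k.+1 = (m' k).+1)
  (Hm0' : forall k, 0 < m' k) :
  isomorphic (LL c m) (LL c' m') ->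
  exists E0, forall e, E0 <= e -> c (e - m 0) = c' (e - m' 0).
Proof.
case=> f [bf Hf]; have [g fK gK] := bf.
have [x0 [H1 H2]] : exists x0, (x0 = pL c m \/ olt x0 (pL c m)) /\
    (f x0 = pL c' m' \/ olt (f x0) (pL c' m')).
  case: (LL_tri (g (pL c' m')) (pL c m)) => [lt|[eq|gt]].
  - by exists (g (pL c' m')); rewrite gK; split; [right|left].
  - by exists (pL c m); rewrite -eq gK; split; left.
  - exists (pL c m); split; [by left|right].
    by rewrite -(gK (pL c' m')); apply/Hf.
have [K PK1] := lep_PK H1; have [K' PK2] := lep_PK H2.
exists (m 0 + m' 0 + K + K' + 2) => e He.
pose k1 := e - m 0 - 1; pose k1' := e - m' 0 - 1.
have mk : m k1.+1 = e by have := m_add Hm 0 k1.+1; rewrite add0n /k1; lia.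
have mk' : m' k1'.+1 = e by have := m_add Hm' 0 k1'.+1; rewrite add0n /k1'; lia.
have I1 := LL_inv Hc Hm Hm0 (proj1 PK1) (proj2 PK1) (k1 := k1) ltac:(rewrite /k1; lia).
have I2 := LL_inv Hc' Hm' Hm0' (proj1 PK2) (proj2 PK2) (k1 := k1') ltac:(rewrite /k1'; lia).
rewrite mk in I1; rewrite mk' in I2.
have I1' := iso_Inv bf Hf I1.
have := Inv_uniq (@LL_tri c' m') I1' I2.
have -> : e - m 0 = k1.+1 by rewrite /k1; lia.
have -> : e - m' 0 = k1'.+1 by rewrite /k1'; lia.
done.
Qed.

Lemma part1 (i j : int) : i <> j -> ~ isomorphic (L i) (L j).
Proof.
move=> ne iso.
have Hn : forall n k, (n + k.+2 = (n + k.+1).+1)%N by move=> n k; rewrite addnS.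
case: i j ne iso => [n|n] [n'|n'] ne iso.
- have [E0 H] := @LL_eq (fun k => k.+1) (fun k => n + k.+1) (fun k => k.+1) (fun k => n' + k.+1)
     (fun k => ltn0Sn k) (Hn n) (fun k => ltn_addl n (ltn0Sn k))
     (fun k => ltn0Sn k) (Hn n') (fun k => ltn_addl n' (ltn0Sn k)) iso.
  have := H (E0 + n + n' + 2) ltac:(lia); move=> /= e; apply: ne; congr Posz; lia.
- have [E0 H] := @LL_eq (fun k => k.+1) (fun k => n + k.+1) (fun k => n'.+1 + k.+1) (fun k => k.+1)
     (fun k => ltn0Sn k) (Hn n) (fun k => ltn_addl n (ltn0Sn k))
     (fun k => ltn_addl n'.+1 (ltn0Sn k)) (fun k => erefl) (fun k => ltn0Sn k) iso.
  have := H (E0 + n + n' + 2) ltac:(lia); move=> /=; lia.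
- have [E0 H] := @LL_eq (fun k => n.+1 + k.+1) (fun k => k.+1) (fun k => k.+1) (fun k => n' + k.+1)
     (fun k => ltn_addl n.+1 (ltn0Sn k)) (fun k => erefl) (fun k => ltn0Sn k)
     (fun k => ltn0Sn k) (Hn n') (fun k => ltn_addl n' (ltn0Sn k)) iso.
  have := H (E0 + n + n' + 2) ltac:(lia); move=> /=; lia.
- have [E0 H] := @LL_eq (fun k => n.+1 + k.+1) (fun k => k.+1) (fun k => n'.+1 + k.+1) (fun k => k.+1)
     (fun k => ltn_addl n.+1 (ltn0Sn k)) (fun k => erefl) (fun k => ltn0Sn k)
     (fun k => ltn_addl n'.+1 (ltn0Sn k)) (fun k => erefl) (fun k => ltn0Sn k) iso.
  have := H (E0 + n + n' + 2) ltac:(lia); move=> /= e; apply: ne; congr Negz; lia.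
Qed.
Lemma acc_lex n : forall s : seq nat, size s = n ->
  Acc (fun a b : seq nat => size a = size b /\ lexlt a b) s.
Proof.
elim: n => [|n IHn] s Hs.
- constructor => a [_ H]; exfalso; move: H; case: s Hs => [|x s] Hs; first by case: a.
  by [].
- case: s Hs => [|h s'] Hs; first by [].
  case: Hs => Hs'.
  elim/ltn_ind: h s' Hs' => h IHh s' Hs'.
  have Acs := IHn s' Hs'; elim: Acs Hs' => {}s' _ IHs Hs'.
  constructor => a [sz H]; case: a sz H => [|a a'] sz H; first by exfalso.
  simpl in sz, H; case: sz => sz.
  case: H => [lt|[e H]].
  + apply: IHh; [exact: lt | by rewrite sz].
  + subst a; apply: IHs; [by split | by rewrite sz].
Qed.
Lemma acc_tuple n (t : (omega_pow n)) : Acc (@olt (omega_pow n)) t.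
Proof.
have : Acc (fun a b : seq nat => size a = size b /\ lexlt a b) (val t).
  by apply: (acc_lex (n := n)); rewrite size_tuple.
move E : (val t) => s A; elim: A t E => {}s _ IH t E.
constructor => t' H; apply: (IH (val t')) => //.
by rewrite -E !size_tuple; split.
Qed.

Lemma acc_kcopies k (Z : ord) : (forall z : Z, Acc (@olt Z) z) ->
  forall a : kcopies k Z, Acc (@olt (kcopies k Z)) a.
Proof.
move=> HZ [j z].
move E : (nat_of_ord j) => jn; elim/ltn_ind: jn j z E => jn IHj j z E.
have Az := HZ z; elim: Az => {}z _ IHz.
constructor => -[j' z'] H.
case: H => [lt|[e H]].
- apply: (IHj (nat_of_ord j') _ j' z' erefl); by rewrite -E.
- simpl in e, H; subst j'; exact: IHz.
Qed.
Lemma acc_cnf (b : CNF) : Acc (@olt omega_omega) b.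
Proof.
move E : (size (sval b)) => n; elim/ltn_ind: n b E => n IHn b E.
have : Acc (fun a b : seq nat => size a = size b /\ lexlt a b) (rev (sval b)).
  by apply: (acc_lex (n := n)); rewrite size_rev.
move Er : (rev (sval b)) => u A; elim: A b E Er => {}u _ IH b E Er.
constructor => b' H; case: H => [lt|[e H]].
- apply: (IHn (size (sval b')) _ b' erefl); by rewrite -E.
- apply: (IH (rev (sval b')) _ b' _ erefl).
  + split; last by rewrite -Er.
    by rewrite -Er !size_rev.
  + by rewrite e.
Qed.
Lemma LL_acc c m (x : LL c m) : forall w, Acc (fun a b => olt a b /\ olt x a) w.
Proof.
have A : forall k (p : kcopies (c k) (omega_pow (m k))),
    Acc (fun a b => olt a b /\ olt x a) (inl (existT _ k p) : LL c m).
  case: (LL_cases x) => [[K [jx [tx ->]]]|[b ->]]; last first.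
    move=> k [j t]; constructor => y [yw xy]; exfalso.
    have [ky [jy [ty Ey]]] := lt_E yw; subst y; exact: xy.
  have vac : forall k (p : kcopies (c k) (omega_pow (m k))), K < k ->
      Acc (fun a b => olt a b /\ olt (E jx tx) a) (inl (existT _ k p) : LL c m).
    move=> k [j t] Kk; constructor => y [yw xy]; exfalso.
    have [ky [jy [ty Ey]]] := lt_E yw; subst y.
    have := blk_le yw; have := blk_le xy; lia.
  move=> k; case: (leqP k K) => [kK|Kk]; last by move=> p; apply: vac.
  move Ed : (K - k) => d; elim/ltn_ind: d k kK Ed => d IHd k kK Ed p.
  have Ap := acc_kcopies (@acc_tuple (m k)) p; elim: Ap => {}p _ IHp.
  constructor => y [yw xy].
  case: p yw IHp => j t yw IHp.
  have [ky [jy [ty Ey]]] := lt_E yw; subst y.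
  case: (eqVneq ky k) => [e|/eqP ne].
  - subst ky; apply: (IHp (jy, ty)); exact/E_same.
  - have kk : k < ky by move/E_diff: yw => /(_ ne).
    case: (leqP ky K) => [kyK|Kky]; last by apply: vac.
    apply: (IHd (K - ky)); [lia | exact: kyK | reflexivity].
move=> w; case: w => [[k p]|b]; first exact: A.
have Ab := acc_cnf b; elim: Ab => {}b _ IHb.
constructor => y [yw xy]; case: y yw xy => [[k p]|b'] yw xy; first exact: A.
exact: IHb.
Qed.
Lemma LL_scattered c m : scattered (LL c m).
Proof.
move=> [D [inf dense]].
have [a [b [Da [Db nab]]]] : exists a b, D a /\ D b /\ a <> b.
  apply: NNPP => H; apply: inf.
  case: (classic (exists a, D a)) => [[a Da]|nD].
  - exists [:: a] => z Dz; left; apply: NNPP => nz; apply: H; by exists a, z.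
  - by exists [::] => z Dz; apply: nD; exists z.
have [x [y [Dx [Dy xy]]]] : exists x y, D x /\ D y /\ olt x y.
  case: (LL_tri a b) => [lt|[e|gt]]; [by exists a, b | by [] | by exists b, a].
have key : forall w, Acc (fun a b => olt a b /\ olt x a) w -> D w -> olt x w -> False.
  move=> w Aw; elim: Aw => {}w _ IH Dw xw.
  have [z [Dz [xz zw]]] := dense x w Dx Dw xw.
  exact: (IH z (conj zw xz) Dz xz).
exact: (key y (LL_acc x y) Dy xy).
Qed.

Theorem mainTheorem3 :
  (forall i j : int, i <> j -> ~ isomorphic (L i) (L j)) /\
  (forall i : int, scattered (L i)).
Proof.
split; first exact: part1.
case=> n.
- exact (@LL_scattered (fun k => k.+1) (fun k => n + k.+1)).
- exact (@LL_scattered (fun k => n.+1 + k.+1) (fun k => k.+1)).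
Qed.
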